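(* Let $m\ge3$, $n\ge1$ and $k=\lfloor n/2\rfloor$. For every probability distribution $p$ on the $m!$ strict rankings of $m$ candidates, $$P(m,n;p)\;\ge\;m\Bigl(1-B\bigl(k;n,\tfrac1m\bigr)\Bigr),$$ and equality holds for the distribution $p^*$ that assigns probability $1/m$ to each of the $m$ cyclic rankings $C_1C_2\cdots C_m$, $C_2C_3\cdots C_mC_1$, $\dots$, $C_mC_1\cdots C_{m-1}$ and probability $0$ to all other rankings. Thus $p^*$ minimizes the probability of a Condorcet winner, and the minimum value is $m(1-B(k;n,1/m))$.
   Context: $n$ voters independently choose a strict ranking (listed best to worst) of the candidates $C_1,\dots,C_m$ according to $p$. A candidate is a Condorcet winner if, for every other candidate, strictly more than $n/2$ voters rank it above that candidate. $P(m,n;p)$ is the probability that a Condorcet winner exists. $B(k;n,q)=\sum_{j=0}^{k}\binom nj q^j(1-q)^{n-j}$ is the binomial cumulative distribution function. *)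

(* Defs.v *)
From mathcomp Require Import all_boot all_order all_algebra all_fingroup.
Set Implicit Arguments. Unset Strict Implicit. Unset Printing Implicit Defensive.
Import Order.TTheory GRing.Theory Num.Theory.
Local Open Scope ring_scope.

(* Candidates C_1..C_m are 'I_m (C_{i+1} = i).  A strict ranking is a
   permutation s : {perm 'I_m}, read as "position j (0 = best) holds
   candidate s j". *)

Definition is_distr (R : numDomainType) (m : nat) (p : {ffun {perm 'I_m} -> R}) :=
  (forall s, 0 <= p s) /\ \sum_(s : {perm 'I_m}) p s = 1.

Definition prefers (m : nat) (s : {perm 'I_m}) (c d : 'I_m) : bool :=
  ((s^-1)%g c < (s^-1)%g d)%N.

Definition condorcet_winner (m n : nat) (prof : {ffun 'I_n -> {perm 'I_m}}) (c : 'I_m) : bool :=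
  [forall d : 'I_m, (d != c) ==> (n < 2 * #|[set i : 'I_n | prefers (prof i) c d]|)%N].

Definition has_condorcet_winner (m n : nat) (prof : {ffun 'I_n -> {perm 'I_m}}) : bool :=
  [exists c : 'I_m, condorcet_winner prof c].

Definition P_cw (R : numDomainType) (m n : nat) (p : {ffun {perm 'I_m} -> R}) : R :=
  \sum_(prof : {ffun 'I_n -> {perm 'I_m}} | has_condorcet_winner prof)
     \prod_(i : 'I_n) p (prof i).

Definition binom_cdf (R : numDomainType) (k n : nat) (q : R) : R :=
  \sum_(j < k.+1) ('C(n, j))%:R * q ^+ j * (1 - q) ^+ (n - j).

(* p^*: probability 1/m on each cyclic ranking C_{r+1} C_{r+2} ... (indices mod m),
   i.e. position j holds candidate (r + j) mod m; 0 elsewhere *)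
Definition pstar (R : numFieldType) (m : nat) : {ffun {perm 'I_m} -> R} :=
  [ffun s : {perm 'I_m} =>
     if [exists r : 'I_m, [forall j : 'I_m, val (s j) == ((r + j) %% m)%N]]
     then (m%:R)^-1 else 0].

(* Main.v *)
Set Warnings "-all".
Require Import Defs.
From mathcomp Require Import all_boot all_order all_algebra all_fingroup.
From mathcomp Require Import ring lra zify.
From Stdlib Require Import FunctionalExtensionality.
Set Implicit Arguments. Unset Strict Implicit. Unset Printing Implicit Defensive.
Import Order.TTheory GRing.Theory Num.Theory.
Local Open Scope ring_scope.

Definition Tv (R : realFieldType) (v : R * R) (h : nat -> nat -> R) : nat -> nat -> R :=
  fun x y => (1 - v.1 - v.2) * h x y + v.1 * h x.+1 y + v.2 * h x y.+1.

Fixpoint EL (R : realFieldType) (L : seq (R * R)) (h : nat -> nat -> R) : R :=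
  match L with [::] => h 0%N 0%N | v :: L' => EL L' (Tv v h) end.

Lemma EL_ext (R : realFieldType) (L : seq (R * R)) (h1 h2 : nat -> nat -> R) :
  (forall x y, h1 x y = h2 x y) -> EL L h1 = EL L h2.
Proof.
elim: L h1 h2 => [|v L IH] h1 h2 H /=; first by apply: H.
by apply: IH => x y; rewrite /Tv !H.
Qed.

Lemma EL_supp (R : realFieldType) (L : seq (R * R)) (h1 h2 : nat -> nat -> R) :
  (forall x y, (x + y <= size L)%N -> h1 x y = h2 x y) -> EL L h1 = EL L h2.
Proof.
elim: L h1 h2 => [|v L IH] h1 h2 H /=; first by apply: H.
apply: IH => x y Hxy; rewrite /Tv !H //= ; lia.
Qed.

Lemma EL_add (R : realFieldType) (L : seq (R * R)) (h1 h2 : nat -> nat -> R) :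
  EL L (fun x y => h1 x y + h2 x y) = EL L h1 + EL L h2.
Proof.
elim: L h1 h2 => [|v L IH] h1 h2 //=.
rewrite -IH; apply: EL_ext => x y; rewrite /Tv; ring.
Qed.

Lemma EL_scale (R : realFieldType) (L : seq (R * R)) c (h : nat -> nat -> R) :
  EL L (fun x y => c * h x y) = c * EL L h.
Proof.
elim: L h => [|v L IH] h //=.
rewrite -IH; apply: EL_ext => x y; rewrite /Tv; ring.
Qed.

Lemma EL_0 (R : realFieldType) (L : seq (R * R)) : EL L (fun _ _ => 0) = 0.
Proof.
elim: L => [|v L IH] //=; rewrite -{2}IH; apply: EL_ext => x y; rewrite /Tv; ring.
Qed.

Lemma EL_sub (R : realFieldType) (L : seq (R * R)) (h1 h2 : nat -> nat -> R) :
  EL L (fun x y => h1 x y - h2 x y) = EL L h1 - EL L h2.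
Proof.
rewrite -mulN1r -EL_scale -EL_add; apply: EL_ext => x y; ring.
Qed.

Lemma EL_sum (R : realFieldType) (L : seq (R * R)) K (F : nat -> nat -> nat -> R) :
  EL L (fun x y => \sum_(j < K) F j x y) = \sum_(j < K) EL L (F j).
Proof.
elim: K => [|K IH].
  rewrite big_ord0; transitivity (EL L (fun _ _ => 0)); last exact: EL_0.
  by apply: EL_ext => x y; rewrite big_ord0.
rewrite big_ord_recr /= -IH -EL_add; apply: EL_ext => x y; by rewrite big_ord_recr.
Qed.

Definition vok (R : realFieldType) (v : R * R) := 0 <= v.2 /\ v.2 <= v.1 /\ v.1 + v.2 <= 1.

Lemma EL_ge0 (R : realFieldType) (L : seq (R * R)) (h : nat -> nat -> R) :
  (forall v, v \in L -> vok v) -> (forall x y, 0 <= h x y) -> 0 <= EL L h.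
Proof.
elim: L h => [|v L IH] h HL Hh /=; first by apply: Hh.
apply: IH; first by move=> w Hw; apply: HL; rewrite inE Hw orbT.
move=> x y; have [H1 [H2 H3]] := HL v (mem_head _ _).
rewrite /Tv; apply: addr_ge0; [apply: addr_ge0|]; apply: mulr_ge0 => //; lra.
Qed.

Definition pi (R : realFieldType) (L : seq (R * R)) (a b : nat) : R :=
  EL L (fun x y => ((x == a) && (y == b))%:R).

Lemma pi_cons (R : realFieldType) (v : R * R) L a b :
  pi (v :: L) a b = (1 - v.1 - v.2) * pi L a b
     + v.1 * (if a is a'.+1 then pi L a' b else 0)
     + v.2 * (if b is b'.+1 then pi L a b' else 0).
Proof.
rewrite /pi /=.
transitivity (EL L (fun x y => (1 - v.1 - v.2) * ((x == a) && (y == b))%:R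
   + v.1 * (if a is a'.+1 then ((x == a') && (y == b))%:R else 0)
   + v.2 * (if b is b'.+1 then ((x == a) && (y == b'))%:R else 0))).
  apply: EL_ext => x y; rewrite /Tv; congr (_ + _ * _ + _ * _).
    by case: a.
  by case: b => [|b]; rewrite ?andbF.
rewrite !EL_add !EL_scale; congr (_ + _ * _ + _ * _).
  by case: a => [|a] //=; exact: EL_0.
by case: b => [|b] //=; exact: EL_0.
Qed.

Lemma pi_ge0 (R : realFieldType) (L : seq (R * R)) a b :
  (forall v, v \in L -> vok v) -> 0 <= pi L a b.
Proof. by move=> HL; apply: EL_ge0 => // x y; rewrite ler0n. Qed.

Lemma pi_inv (R : realFieldType) (L : seq (R * R)) :
  (forall v, v \in L -> vok v) ->
  forall a b a' b', (a + b = a' + b')%N -> (a <= a')%N -> (a' <= b)%N ->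
  pi L a b <= pi L a' b'.
Proof.
elim: L => [|v L IH] HL a b a' b' Hs Ha Hb.
  rewrite /pi /=; case E: ((0 == a) && (0 == b))%N.
    move/andP: E => [/eqP Ea /eqP Eb]; subst a b.
    have -> : a' = 0%N by lia.
    have -> : b' = 0%N by lia.
    by rewrite eqxx.
  by case: (_ && _); rewrite ?ler01 ?lexx.
have HL' : forall w, w \in L -> vok w by move=> w Hw; apply: HL; rewrite inE Hw orbT.
have [H1 [H2 H3]] := HL v (mem_head _ _).
have IH' := IH HL'.
have P0 := pi_ge0 _ _ HL'.
case: (ltngtP a a') Ha => // [Hlt|Eq] _; last first.
  have -> : b' = b by lia.
  by rewrite Eq.
rewrite !pi_cons.
have Ig := IH' a b a' b' Hs (ltnW Hlt) Hb.
move: Ig; case: b Hs Hb => [|b] Hs Hb Ig; first lia.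
move: Ig; case: a' Hs Hb Hlt => [|a'] Hs Hb Hlt Ig; first lia.
case: (ltngtP a' b) => Hab.
-
  case: b' Hs Ig => [|b'] Hs Ig; first lia.
  have Ib := IH' a b a'.+1 b' ltac:(lia) ltac:(lia) ltac:(lia).
  have Ia : (if a is a0.+1 then pi L a0 b.+1 else 0) <= pi L a' b'.+1.
    case: a Hs Hlt Ig Ib => [|a] Hs Hlt Ig Ib; first exact: P0.
    apply: IH'; lia.
  apply: lerD; [apply: lerD|]; apply: ler_wpM2l => //; lra.
- lia.
-
  subst a'.
  have Eb' : b' = a by lia.
  subst b'.
  have Ii : pi L a b <= pi L b a by apply: IH'; lia.
  case: a Hs Hlt Ig Ii => [|a] Hs Hlt Ig Ii.
    have T1 : (1 - v.1 - v.2) * (pi L 0 b.+1 - pi L b.+1 0) <= 0.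
      by apply: mulr_ge0_le0; lra.
    have T2 : v.2 * (pi L 0 b - pi L b 0) <= 0.
      by apply: mulr_ge0_le0; lra.
    have T3 : (v.1 - v.2) * pi L b 0 >= 0 by apply: mulr_ge0; [lra|apply: P0].
    have T4 : v.2 * pi L b 0 >= 0 by apply: mulr_ge0; [lra|apply: P0].
    lra.
  have Iii : pi L a b.+1 <= pi L b.+1 a by apply: IH'; lia.
  have Iiii : pi L a b.+1 <= pi L b a.+1 by apply: IH'; lia.
  have T1 : (1 - v.1 - v.2) * (pi L a.+1 b.+1 - pi L b.+1 a.+1) <= 0.
    by apply: mulr_ge0_le0; lra.
  have T2 : v.2 * (pi L a b.+1 - pi L b.+1 a) <= 0.
    by apply: mulr_ge0_le0; lra.
  have T3 : (v.1 - v.2) * (pi L a b.+1 - pi L b a.+1) <= 0.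
    by apply: mulr_ge0_le0; lra.
  have T4 : v.2 * (pi L a.+1 b - pi L b a.+1) <= 0.
    by apply: mulr_ge0_le0; lra.
  lra.
Qed.

Lemma sum_ind (R : realFieldType) K q : (q < K)%N -> \sum_(j < K) ((q == j)%N)%:R = 1 :> R.
Proof.
move=> Hq; rewrite (bigD1 (Ordinal Hq)) //= eqxx big1 ?addr0 // => j Hj.
case: eqP => // Eq; exfalso; move/eqP: Hj; apply; apply: val_inj => /=; by rewrite Eq.
Qed.

Lemma sum_ind0 (R : realFieldType) K q : (K <= q)%N -> \sum_(j < K) ((q == j)%N)%:R = 0 :> R.
Proof.
move=> Hq; rewrite big1 // => j _; case: eqP => // Eq; have := ltn_ord j; lia.
Qed.

Lemma agree (R : realFieldType) k p q : (p + q <= 2 * k)%N ->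
  ((p == k)%N%:R - (q == k)%N%:R : R) =
  \sum_(j < k.+1) ((((p == k) && (q == j))%N)%:R - (((p == j) && (q == k))%N)%:R).
Proof.
move=> Hpq; rewrite sumrB; congr (_ - _).
  case: (eqVneq p k) => [Ep|Hp] /=.
    by rewrite sum_ind //; lia.
  by rewrite big1.
case: (eqVneq q k) => [Eq|Hq] /=.
  transitivity (\sum_(j < k.+1) ((p == j)%N)%:R : R).
    by rewrite sum_ind //; lia.
  by apply: eq_bigr => j _; rewrite andbT.
by rewrite big1 // => j _; rewrite andbF.
Qed.

Lemma key_ineq (R : realFieldType) (L : seq (R * R)) k :
  (forall v, v \in L -> vok v) -> (size L <= 2 * k)%N ->
  0 <= EL L (fun p q => (p == k)%N%:R - (q == k)%N%:R).
Proof.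
move=> HL Hs.
rewrite (@EL_supp _ L _ (fun p q => \sum_(j < k.+1) ((((p == k) && (q == j))%N)%:R
     - (((p == j) && (q == k))%N)%:R))); last first.
  by move=> p q Hpq; apply: agree; lia.
rewrite (EL_sum L k.+1 (fun j p q => (((p == k) && (q == j))%N)%:R
     - (((p == j) && (q == k))%N)%:R)); apply: sumr_ge0 => j _; rewrite EL_sub subr_ge0.
change (pi L j k <= pi L k j).
apply: (pi_inv HL); have := ltn_ord j; lia.
Qed.

Definition BE (R : realFieldType) (n : nat) (a : R) (g : nat -> R) : R :=
  \sum_(j < n.+1) ('C(n, j))%:R * a ^+ j * (1 - a) ^+ (n - j) * g j.

Lemma BE_S (R : realFieldType) n (a : R) g :
  BE n.+1 a g = BE n a (fun j => (1 - a) * g j + a * g j.+1).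
Proof.
rewrite /BE big_ord_recl /= bin0 subn0.
under eq_bigr => j _ do rewrite /bump leq0n add1n binS natrD subSS !mulrDl.
rewrite big_split /=.
under [in RHS]eq_bigr => j _ do rewrite mulrDr.
rewrite [in RHS]big_split /=.
rewrite addrA; congr (_ + _); last first.
  by apply: eq_bigr => j _; rewrite exprS; ring.
rewrite [in RHS]big_ord_recl /= bin0 subn0.
rewrite [X in _ + X = _]big_ord_recr /= bin_small // mul0r !mul0r addr0.
congr (_ + _); first by rewrite exprS expr0; ring.
apply: eq_bigr => j _; rewrite /bump leq0n add1n ?subSS.
have -> : (n - j = (n - j.+1).+1)%N by have := ltn_ord j; lia.
rewrite [(1 - a) ^+ (_.+1)]exprS; ring.
Qed.

Lemma BE0 (R : realFieldType) (a : R) g : BE 0 a g = g 0%N.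
Proof. by rewrite /BE big_ord1 /= bin0 !expr0 !mul1r. Qed.

Lemma EL_marg1 (R : realFieldType) n (a b : R) g :
  EL (nseq n (a, b)) (fun x y => g x) = BE n a g.
Proof.
elim: n g => [|n IH] g /=; first by rewrite BE0.
rewrite BE_S -IH; apply: EL_ext => x y; rewrite /Tv /=; ring.
Qed.

Lemma EL_marg2 (R : realFieldType) n (a b : R) g :
  EL (nseq n (a, b)) (fun x y => g y) = BE n b g.
Proof.
elim: n g => [|n IH] g /=; first by rewrite BE0.
rewrite BE_S -IH; apply: EL_ext => x y; rewrite /Tv /=; ring.
Qed.

Fixpoint Tf (R : realFieldType) (L : seq (R * R)) (h : nat -> nat -> R) :=
  match L with [::] => h | v :: L' => Tf L' (Tv v h) end.

Lemma EL_cat (R : realFieldType) (L1 L2 : seq (R * R)) h :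
  EL (L1 ++ L2) h = EL L2 (Tf L1 h).
Proof. by elim: L1 h => [|v L1 IH] h //=. Qed.

Definition Dh (R : realFieldType) (h : nat -> nat -> R) : nat -> nat -> R :=
  fun x y => h x.+1 y - h x y.+1.

Lemma Tf_D (R : realFieldType) (L : seq (R * R)) h : Dh (Tf L h) = Tf L (Dh h).
Proof.
elim: L h => [|v L IH] h //=; rewrite IH; congr (Tf L _).
apply: functional_extensionality => x; apply: functional_extensionality => y.
rewrite /Dh /Tv; ring.
Qed.

Lemma nseqS_cat (T : Type) i (x : T) R : nseq i.+1 x ++ R = nseq i x ++ x :: R.
Proof. by elim: i => [|i IH] //=; rewrite -IH. Qed.

Lemma gstep (R : realFieldType) k x :
  ((k < x.+1)%N%:R - (k < x)%N%:R : R) = (x == k)%N%:R.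
Proof.
rewrite ltnS leq_eqVlt [(k == x)%N]eq_sym; case: eqP => [->|_] /=.
  by rewrite ltnn subr0.
by rewrite subrr.
Qed.

Lemma mono (R : realFieldType) n k (s u x : R) :
  (n <= (2 * k).+1)%N ->
  0 <= s -> s <= 1 -> s <= 2 * u -> u <= x -> x <= s ->
  EL (nseq n (u, s - u)) (fun p q => (k < p)%N%:R + (k < q)%N%:R)
  <= EL (nseq n (x, s - x)) (fun p q => (k < p)%N%:R + (k < q)%N%:R).
Proof.
move=> Hn Hs0 Hs1 Hsu Hux Hxs.
set h0 := (fun p q => _).
set H := fun i => nseq i (x, s - x) ++ nseq (n - i) (u, s - u).
have step : forall i, (i < n)%N -> EL (H i) h0 <= EL (H i.+1) h0.
  move=> i Hi; rewrite /H nseqS_cat.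
  have -> : (n - i = (n - i.+1).+1)%N by lia.
  rewrite /= !EL_cat /=.
  set h' := Tf _ h0; set Rl := nseq _ _.
  have -> : EL Rl (Tv (x, s - x) h') = EL Rl (Tv (u, s - u) h') + (x - u) * EL Rl (Dh h').
    rewrite -EL_scale -EL_add; apply: EL_ext => p q; rewrite /Tv /Dh /=; ring.
  rewrite lerDl; apply: mulr_ge0; first lra.
  rewrite /h' Tf_D -EL_cat.
  rewrite (@EL_ext _ _ _ (fun p q => (p == k)%N%:R - (q == k)%N%:R)); last first.
    move=> p q; rewrite /Dh /h0 -(gstep R k p) -(gstep R k q); ring.
  apply: key_ineq.
    move=> v; rewrite mem_cat => /orP [] /nseqP [-> _]; rewrite /vok /=; lra.
  rewrite size_cat !size_nseq; lia.
have chain : forall i, (i <= n)%N -> EL (H 0%N) h0 <= EL (H i) h0.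
  elim => [|i IH] Hi //; apply: le_trans (IH (ltnW Hi)) (step _ Hi).
have := chain n (leqnn n); rewrite /H /= subn0 subnn cats0 //.
Qed.

Definition gk (R : realFieldType) (k : nat) : nat -> R := fun j => (k < j)%N%:R.

Lemma TP (R : realFieldType) n k (x y u : R) :
  (n <= (2 * k).+1)%N ->
  0 <= y -> y <= u -> u <= x -> x + y <= 1 ->
  BE n u (gk R k) + BE n (x + y - u) (gk R k) <= BE n x (gk R k) + BE n y (gk R k).
Proof.
move=> Hn Hy Hyu Hux Hxy.
set s := x + y.
have E : forall a, BE n a (gk R k) + BE n (s - a) (gk R k)
   = EL (nseq n (a, s - a)) (fun p q => (k < p)%N%:R + (k < q)%N%:R).
  by move=> a; rewrite EL_add EL_marg1 EL_marg2.
have -> : BE n x (gk R k) + BE n y (gk R k) = BE n x (gk R k) + BE n (s - x) (gk R k).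
  by congr (_ + BE n _ _); rewrite /s; ring.
rewrite (E x).
case: (lerP s (2 * u)) => Hsu.
  rewrite (E u); apply: mono => //; rewrite /s; lra.
rewrite addrC.
have {2}-> : u = s - (s - u) by ring.
rewrite (E (s - u)); apply: mono => //; clear E; move: Hsu; rewrite /s; clearbody s; move=> Hsu; lra.
Qed.

Lemma robin (R : realFieldType) (F : R -> R) m (q : 'I_m -> R) :
  (0 < m)%N ->
  (forall x y u, 0 <= y -> y <= u -> u <= x -> x + y <= 1 -> F u + F (x + y - u) <= F x + F y) ->
  (forall c, 0 <= q c) -> \sum_c q c = 1 ->
  m%:R * F (m%:R^-1) <= \sum_c F (q c).
Proof.
move=> Hm HTP.
set mu := (m%:R^-1 : R).
have Hmu : m%:R * mu = 1 by rewrite /mu mulfV // pnatr_eq0 -lt0n.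
have Hmu0 : 0 < mu by rewrite /mu invr_gt0 ltr0n.
suff : forall N (q : 'I_m -> R), (#|[set c | q c != mu]| <= N)%N ->
  (forall c, 0 <= q c) -> \sum_c q c = 1 -> m%:R * F mu <= \sum_c F (q c) by apply.
elim => [|N IH] {}q Hcard Hq0 Hsum.
  have Heq : forall c, q c = mu.
    move=> c; apply/eqP; apply: contraT => Hc.
    have : (0 < #|[set c | q c != mu]|)%N by apply/card_gt0P; exists c; rewrite inE.
    lia.
  under eq_bigr => c _ do rewrite Heq.
  by rewrite sumr_const card_ord mulr_natl.
case: (boolP [forall c, q c == mu]) => [/forallP Hall|].
  under eq_bigr => c _ do rewrite (eqP (Hall c)).
  by rewrite sumr_const card_ord mulr_natl.
rewrite negb_forall => /existsP [c0 Hc0].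
have Hsum0 : \sum_c (q c - mu) = 0.
  by rewrite sumrB Hsum sumr_const card_ord -mulr_natl Hmu subrr.
have [i Hi] : exists i, mu < q i.
  apply/existsP; apply: contraT; rewrite negb_exists => /forallP Hle.
  have Hle' : forall c, q c <= mu by move=> c; have := Hle c; rewrite -leNgt.
  have Z : forall c, mu - q c = 0.
    move=> c; apply: (@psumr_eq0P _ _ xpredT (fun c => mu - q c)) => //.
      by move=> d _; rewrite subr_ge0.
    rewrite (eq_bigr (fun c => - (q c - mu))); last by move=> c' _; ring.
    by rewrite sumrN Hsum0 oppr0.
  suff : False by []; move/eqP: Hc0; apply; have := Z c0; lra.
have [j Hj] : exists j, q j < mu.
  apply/existsP; apply: contraT; rewrite negb_exists => /forallP Hle.
  have Hle' : forall c, mu <= q c by move=> c; have := Hle c; rewrite -leNgt.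
  have Z : forall c, q c - mu = 0.
    move=> c; apply: (@psumr_eq0P _ _ xpredT (fun c => q c - mu)) => //.
    by move=> d _; rewrite subr_ge0.
  suff : False by []; move/eqP: Hc0; apply; have := Z c0; lra.
have Hij : j != i by apply/eqP => E; subst; lra.
set q' := fun c => if c == i then mu else if c == j then q i + q j - mu else q c.
have split3 : forall G : 'I_m -> R, \sum_c G c = G i + G j + \sum_(c | (c != i) && (c != j)) G c.
  by move=> G; rewrite (bigD1 i) //= (bigD1 j) //= addrA.
have Hrest : forall c, (c != i) && (c != j) -> q' c = q c.
  by move=> c /andP [Hci Hcj]; rewrite /q' (negbTE Hci) (negbTE Hcj).
have Hq'i : q' i = mu by rewrite /q' eqxx.
have Hq'j : q' j = q i + q j - mu by rewrite /q' eqxx (negbTE Hij).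
have Hrest0 : 0 <= \sum_(c | (c != i) && (c != j)) q c by apply: sumr_ge0.
have Hsum' : \sum_c q c = q i + q j + \sum_(c | (c != i) && (c != j)) q c by apply: split3.
apply: (@le_trans _ _ (\sum_c F (q' c))).
  apply: IH.
  - have Hsub : [set c | q' c != mu] \subset [set c | q c != mu] :\ i.
      apply/subsetP => c; rewrite !inE.
      case: (eqVneq c i) => [->|Hci]; first by rewrite Hq'i eqxx.
      case: (eqVneq c j) => [->|Hcj] /=.
        by move=> _; apply/eqP => E; lra.
      by rewrite Hrest // Hci Hcj.
    have := subset_leq_card Hsub.
    have := cardsD1 i [set c | q c != mu]; rewrite inE.
    have -> : (q i != mu) = true by apply/eqP => E; lra.
    lia.
  - move=> c; case: (eqVneq c i) => [->|Hci]; first by rewrite Hq'i ltW.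
    case: (eqVneq c j) => [->|Hcj]; first by rewrite Hq'j; have := Hq0 j; lra.
    by rewrite Hrest ?Hci ?Hcj.
  - rewrite split3 Hq'i Hq'j (eq_bigr q) -?Hsum; last by move=> c Hc; rewrite Hrest.
    rewrite Hsum'; ring.
rewrite !split3 Hq'i Hq'j (eq_bigr (fun c => F (q c))); last by move=> c Hc; rewrite Hrest.
rewrite lerD2r; apply: HTP.
- exact: Hq0.
- exact: ltW.
- exact: ltW.
- rewrite -Hsum Hsum'; lra.
Qed.

Lemma prof_fixed (R : realFieldType) (T : finType) n (w : T -> R) (A : pred T) (S : {set 'I_n}) :
  \sum_(prof : {ffun 'I_n -> T} | [set i | A (prof i)] == S) \prod_i w (prof i)
  = (\sum_(t | A t) w t) ^+ #|S| * (\sum_(t | ~~ A t) w t) ^+ (n - #|S|).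
Proof.
rewrite (eq_bigl (fun prof : {ffun 'I_n -> T} => prof \in family (fun i => [pred t | A t == (i \in S)]))); last first.
  move=> prof; apply/eqP/familyP => [<- i|H]; first by rewrite !inE.
  by apply/setP => i; rewrite inE; move: (H i); rewrite inE => /eqP.
rewrite -(bigA_distr_big_dep _ (fun i t => w t)).
rewrite (bigID (fun i => i \in S)) /=.
rewrite (eq_bigr (fun _ => \sum_(t | A t) w t)); last first.
  by move=> i Hi; apply: eq_bigl => t; rewrite Hi eqb_id.
rewrite [X in _ * X](eq_bigr (fun _ => \sum_(t | ~~ A t) w t)); last first.
  by move=> i Hi; apply: eq_bigl => t; rewrite (negbTE Hi) eqbF_neg.
rewrite !prodr_const; congr (_ * _ ^+ _).
have H := cardsC S; rewrite card_ord in H.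
have -> : #|(fun i => i \notin S)| = #|~: S| by apply: eq_card => i; rewrite !inE.
move: H; move: #|S| #|~: S| => a b H; lia.
Qed.

Lemma prof_sum (R : realFieldType) (T : finType) n (w : T -> R) (A : pred T) (g : nat -> R) :
  \sum_(prof : {ffun 'I_n -> T}) g #|[set i | A (prof i)]| * \prod_i w (prof i)
  = \sum_(j < n.+1) ('C(n, j))%:R * (\sum_(t | A t) w t) ^+ j
        * (\sum_(t | ~~ A t) w t) ^+ (n - j) * g j.
Proof.
rewrite (partition_big (fun prof : {ffun 'I_n -> T} => [set i | A (prof i)]) xpredT) //=.
rewrite (eq_bigr (fun S : {set 'I_n} => g #|S| * ((\sum_(t | A t) w t) ^+ #|S|
    * (\sum_(t | ~~ A t) w t) ^+ (n - #|S|)))); last first.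
  move=> S _; rewrite -prof_fixed mulr_sumr; apply: eq_bigr => prof /eqP <-; done.
have HS : forall S : {set 'I_n}, (#|S| < n.+1)%N.
  by move=> S; rewrite ltnS; have := max_card S; rewrite card_ord.
rewrite (partition_big (fun S : {set 'I_n} => Ordinal (HS S)) xpredT) //=.
apply: eq_bigr => j _.
rewrite (eq_bigr (fun _ => g j * ((\sum_(t | A t) w t) ^+ j
    * (\sum_(t | ~~ A t) w t) ^+ (n - j)))); last first.
  by move=> S /eqP <-.
rewrite sumr_const.
have -> : #|[pred S : {set 'I_n} | Ordinal (HS S) == j]| = 'C(n, j).
  have := card_draws 'I_n j; rewrite card_ord => <-.
  apply: eq_card => S; rewrite !inE.
  by apply/eqP/eqP => [<-|E] //; apply: val_inj.
rewrite -mulr_natl; ring.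
Qed.

Lemma half_lt n j : (n < 2 * j)%N = (n./2 < j)%N.
Proof. by rewrite ltn_half_double mul2n. Qed.

Lemma n_le_half n : (n <= (2 * n./2).+1)%N.
Proof. by rewrite mul2n -leq_half_double. Qed.

Definition tm n m (prof : {ffun 'I_n -> {perm 'I_m.+1}}) (c : 'I_m.+1) : bool :=
  (n < 2 * #|[set i | prof i ord0 == c]|)%N.

Lemma top_prefers m (s : {perm 'I_m.+1}) c d : s ord0 = c -> d != c -> prefers s c d.
Proof.
move=> Hs Hd; rewrite /prefers -Hs permK lt0n; apply/eqP => E.
have E' : (s^-1)%g d = ord0 by apply: val_inj.
by move/eqP: Hd; apply; rewrite -(permKV s d) E'.
Qed.

Lemma tm_cw n m (prof : {ffun 'I_n -> {perm 'I_m.+1}}) c : tm prof c -> condorcet_winner prof c.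
Proof.
rewrite /tm => H; apply/forallP => d; apply/implyP => Hd.
apply: (leq_trans H); rewrite leq_mul2l /=; apply: subset_leq_card.
apply/subsetP => i; rewrite !inE => /eqP Hi; exact: top_prefers.
Qed.

Lemma tm_disj n m (prof : {ffun 'I_n -> {perm 'I_m.+1}}) c c' :
  c != c' -> tm prof c -> tm prof c' -> False.
Proof.
rewrite /tm => Hcc' H1 H2.
have Hu := cardsUI [set i | prof i ord0 == c] [set i | prof i ord0 == c'].
have H0 : [set i | prof i ord0 == c] :&: [set i | prof i ord0 == c'] = set0.
  apply/setP => i; rewrite !inE; apply/negP => /andP [/eqP E1 /eqP E2].
  by move/eqP: Hcc'; apply; rewrite -E1 -E2.
rewrite H0 cards0 addn0 in Hu.
have := max_card ([set i | prof i ord0 == c] :|: [set i | prof i ord0 == c']).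
rewrite card_ord; lia.
Qed.

Lemma sum_tm (R : realFieldType) n m (prof : {ffun 'I_n -> {perm 'I_m.+1}}) :
  \sum_c (tm prof c)%:R = ([exists c, tm prof c])%:R :> R.
Proof.
case: existsP => [[c0 H0]|Hno].
  rewrite (bigD1 c0) //= H0 big1 ?addr0 // => c Hc.
  case E: (tm prof c) => //; exfalso; exact: (tm_disj Hc E H0).
by rewrite big1 // => c _; case E: (tm prof c) => //; exfalso; apply: Hno; exists c.
Qed.

Definition qtop (R : realFieldType) m (p : {ffun {perm 'I_m.+1} -> R}) (c : 'I_m.+1) : R :=
  \sum_(s : {perm 'I_m.+1} | s ord0 == c) p s.

Lemma tm_BE (R : realFieldType) n m (p : {ffun {perm 'I_m.+1} -> R}) c :
  \sum_(s : {perm 'I_m.+1}) p s = 1 ->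
  \sum_(prof : {ffun 'I_n -> {perm 'I_m.+1}}) (tm prof c)%:R * \prod_i p (prof i)
  = BE n (qtop p c) (gk R n./2).
Proof.
move=> Hs.
have := @prof_sum R _ n p (fun s : {perm 'I_m.+1} => s ord0 == c) (fun j => (n < 2 * j)%N%:R).
rewrite /tm => ->.
have Hb : \sum_(t : {perm 'I_m.+1} | ~~ (t ord0 == c)) p t = 1 - qtop p c.
  by rewrite -Hs /qtop [X in _ = X - _](bigID (fun t : {perm 'I_m.+1} => t ord0 == c)) /= addrC addrK.
rewrite Hb /BE; apply: eq_bigr => j _; by rewrite /gk half_lt.
Qed.

Lemma Pcw_ge (R : realFieldType) n m (p : {ffun {perm 'I_m.+1} -> R}) :
  (forall s, 0 <= p s) ->
  \sum_c \sum_(prof : {ffun 'I_n -> {perm 'I_m.+1}}) (tm prof c)%:R * \prod_i p (prof i)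
  <= P_cw n p.
Proof.
move=> Hp; rewrite exchange_big /P_cw [X in _ <= X]big_mkcond /=; apply: ler_sum => prof _.
rewrite -mulr_suml sum_tm.
have H0 : 0 <= \prod_i p (prof i) by apply: prodr_ge0.
case: existsP => [[c Hc]|_].
  have -> : has_condorcet_winner prof by apply/existsP; exists c; exact: tm_cw.
  by rewrite mul1r.
by rewrite mul0r; case: ifP.
Qed.

Lemma qtop_sum (R : realFieldType) m (p : {ffun {perm 'I_m.+1} -> R}) :
  \sum_c qtop p c = \sum_s p s.
Proof.
by rewrite (partition_big (fun s : {perm 'I_m.+1} => s ord0) xpredT).
Qed.

Lemma BE_cdf (R : realFieldType) k n (q : R) : (k <= n)%N ->
  BE n q (gk R k) = 1 - binom_cdf k n q.
Proof.
move=> Hk.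
have H1 : \sum_(j < n.+1) ('C(n, j))%:R * q ^+ j * (1 - q) ^+ (n - j) = 1.
  rewrite [RHS](_ : 1 = (1 - q + q) ^+ n); last by rewrite subrK expr1n.
  rewrite exprDn; apply: eq_bigr => j _.
  by rewrite -mulr_natl; ring.
rewrite /binom_cdf -{1}H1 /BE (@big_ord_widen R 0 +%R k.+1 n.+1 (fun j => ('C(n, j))%:R * q ^+ j * (1 - q) ^+ (n - j))) //.
rewrite [X in _ = _ - X]big_mkcond -sumrB; apply: eq_bigr => j _ /=.
rewrite /gk; case: ltnP => H /=; [rewrite ifF|rewrite ifT]; try ring; lia.
Qed.

Definition cycf m (r j : 'I_m.+1) : 'I_m.+1 := Ordinal (ltn_pmod (r + j) (ltn0Sn m)).

Lemma cycf_inj m (r : 'I_m.+1) : injective (cycf r).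
Proof.
move=> j j' /(congr1 val) /= E; apply: val_inj.
have : (r + j == r + j' %[mod m.+1])%N by apply/eqP.
by rewrite eqn_modDl !modn_small // => /eqP.
Qed.

Definition cyc m (r : 'I_m.+1) : {perm 'I_m.+1} := perm (@cycf_inj m r).

Lemma cycE m (r j : 'I_m.+1) : val (cyc r j) = ((r + j) %% m.+1)%N.
Proof. by rewrite /cyc permE. Qed.

Definition iscyc m (s : {perm 'I_m.+1}) : bool :=
  [exists r : 'I_m.+1, [forall j : 'I_m.+1, val (s j) == ((r + j) %% m.+1)%N]].

Lemma iscyc_cyc m (r : 'I_m.+1) : iscyc (cyc r).
Proof. by apply/existsP; exists r; apply/forallP => j; rewrite cycE. Qed.

Lemma cyc_uniq m (s : {perm 'I_m.+1}) c : iscyc s -> s ord0 = c -> s = cyc c.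
Proof.
case/existsP => r /forallP H Hs.
have Er : r = c.
  apply: val_inj; move/eqP: (H ord0); rewrite Hs /= addn0 modn_small //.
apply/permP => j; apply: val_inj; rewrite cycE -Er; exact/eqP.
Qed.

Lemma pstar_val (R : realFieldType) m (s : {perm 'I_m.+1}) :
  pstar R m.+1 s = if iscyc s then (m.+1)%:R^-1 else 0.
Proof. by rewrite /pstar ffunE. Qed.

Lemma qtop_pstar (R : realFieldType) m (c : 'I_m.+1) :
  qtop (pstar R m.+1) c = (m.+1)%:R^-1.
Proof.
have Hc : cyc c ord0 == c by apply/eqP; apply: val_inj; rewrite cycE addn0 modn_small.
rewrite /qtop (bigD1 (cyc c)) //= pstar_val iscyc_cyc big1 ?addr0 // => s /andP [/eqP Hs Hne].
rewrite pstar_val; case: ifP => // Hcy.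
by move/eqP: Hne; case; apply: cyc_uniq.
Qed.

Lemma pstar_distr (R : realFieldType) m : is_distr (pstar R m.+1).
Proof.
split.
  by move=> s; rewrite pstar_val; case: ifP => _ //; rewrite invr_ge0 ler0n.
rewrite -qtop_sum (eq_bigr (fun _ => (m.+1)%:R^-1)); last by move=> c _; rewrite qtop_pstar.
rewrite sumr_const (_ : #|_| = m.+1); last by rewrite cardT size_enum_ord.
by rewrite -(mulr_natl (m.+1%:R^-1)) mulfV // pnatr_eq0.
Qed.

Definition dpred m (c : 'I_m.+1) : 'I_m.+1 := Ordinal (ltn_pmod (c + m) (ltn0Sn m)).

Lemma dpred_ne m (c : 'I_m.+1) : (0 < m)%N -> dpred c != c.
Proof.
move=> Hm; apply/eqP => /(congr1 val) /=.
case: (posnP c) => Hc.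
  by rewrite Hc add0n modn_small //; lia.
have -> : (c + m = (c - 1) + m.+1)%N by lia.
rewrite modnDr modn_small; [lia|]; have := ltn_ord c; lia.
Qed.

Lemma cyc_pref m (s : {perm 'I_m.+1}) (c : 'I_m.+1) :
  iscyc s -> prefers s c (dpred c) -> s ord0 = c.
Proof.
case/existsP => r /forallP H; rewrite /prefers.
set jc := (s^-1)%g c.
have Hjc : s jc = c by rewrite /jc permKV.
case: (posnP jc) => Hj0.
  by move=> _; rewrite -Hjc; congr (s _); apply: val_inj.
have Hj' : (jc.-1 < m.+1)%N by have := ltn_ord jc; lia.
set J := Ordinal Hj'.
have HsJ : s J = dpred c.
  apply: val_inj; rewrite /=; move/eqP: (H J) => -> /=.
  move/eqP: (H jc); rewrite Hjc => ->.
  rewrite modnDml.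
  have -> : (r + jc + m = (r + jc.-1) + m.+1)%N by lia.
  by rewrite modnDr.
have -> : (s^-1)%g (dpred c) = J by rewrite -HsJ permK.
rewrite /=; lia.
Qed.

Lemma cw_tm n m (prof : {ffun 'I_n -> {perm 'I_m.+1}}) c :
  (0 < m)%N -> (forall i, iscyc (prof i)) -> condorcet_winner prof c -> tm prof c.
Proof.
move=> Hm Hall /forallP /(_ (dpred c)) /implyP /(_ (dpred_ne c Hm)) H.
rewrite /tm; apply: (leq_trans H); rewrite leq_mul2l /=; apply: subset_leq_card.
apply/subsetP => i; rewrite !inE => Hp; apply/eqP; exact: cyc_pref.
Qed.

Lemma Pcw_pstar (R : realFieldType) n m : (0 < m)%N ->
  P_cw n (pstar R m.+1) =
  \sum_c \sum_(prof : {ffun 'I_n -> {perm 'I_m.+1}}) (tm prof c)%:R * \prod_i pstar R m.+1 (prof i).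
Proof.
move=> Hm; rewrite exchange_big /P_cw big_mkcond /=; apply: eq_bigr => prof _.
rewrite -mulr_suml sum_tm.
case: (boolP [forall i, iscyc (prof i)]) => [/forallP Hall|].
  have -> : has_condorcet_winner prof = [exists c, tm prof c].
    apply/idP/idP => /existsP [c Hc]; apply/existsP; exists c.
      exact: cw_tm.
    exact: tm_cw.
  by case: existsP => _; rewrite ?mul1r ?mul0r.
rewrite negb_forall => /existsP [i Hi].
rewrite (bigD1 i) //= pstar_val (negbTE Hi) mul0r mulr0.
by case: ifP.
Qed.

Lemma half_le n : (n./2 <= n)%N.
Proof. by rewrite leq_half_double -mul2n; lia. Qed.

Theorem mainTheorem10 (R : realFieldType) (m n : nat) :
  (3 <= m)%N -> (1 <= n)%N ->
  (forall p : {ffun {perm 'I_m} -> R}, is_distr p ->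
     m%:R * (1 - binom_cdf n./2 n (m%:R)^-1) <= P_cw n p)
  /\ is_distr (pstar R m)
  /\ P_cw n (pstar R m) = m%:R * (1 - binom_cdf n./2 n (m%:R)^-1).
Proof.
case: m => [|m] Hm Hn //.
have Hm0 : (0 < m)%N by lia.
split; last split.
- move=> p [Hp0 Hp1].
  rewrite -BE_cdf ?half_le //.
  apply: le_trans (Pcw_ge n Hp0).
  rewrite (eq_bigr (fun c => BE n (qtop p c) (gk R n./2))); last by move=> c _; apply: tm_BE.
  apply: (robin (F := fun z => BE n z (gk R n./2))) => //.
  + by move=> x y u Hy Hyu Hux Hxy; apply: TP => //; apply: n_le_half.
  + by move=> c; apply: sumr_ge0.
  + by rewrite qtop_sum.
- exact: pstar_distr.
- rewrite Pcw_pstar //.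
  rewrite (eq_bigr (fun c => BE n (m.+1%:R^-1) (gk R n./2))); last first.
    move=> c _; rewrite tm_BE ?qtop_pstar //; by case: (pstar_distr R m).
  rewrite sumr_const (_ : #|_| = m.+1); last by rewrite cardT size_enum_ord.
  by rewrite -(mulr_natl (BE _ _ _)) BE_cdf ?half_le.
Qed.
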